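(* One has $w(\bar\alpha_0)=\frac12$, and for all $n\ge1$: $$w(\bar\alpha_n)=-\frac{3}{2^{n+1}(2n-1)!!},\qquad w(\bar Z_{n+1})=-\frac1{2^{n-1}(2n+1)!!}.$$
   Context: $\mathcal A$ is the free associative $\mathbb R$-algebra of noncommutative polynomials in symbols $N$ (degree 1) and $\Delta$ (degree 2). Each $A\in\mathcal A$ homogeneous of degree $\ge1$ is uniquely written $A=\bar AN+\tilde A\Delta$. The weight $w:\mathcal A\to\mathbb R$ is the algebra homomorphism with $w(I)=1$, $w(N)=2$, $w(\Delta)=-1$. Define $R_{kj},S_{kj}$ ($k,j$ integers): $R_{00}=I$, $S_{00}=0$, $R_{kj}=S_{kj}=0$ if $k<0$ or $j<0$, otherwise $R_{kj}=-(N^2+\Delta)R_{k-1,j}+NS_{k-1,j}$, $S_{kj}=\Delta NR_{k-1,j}-\Delta S_{k-1,j}+NR_{k-1,j-1}$. Let $\{a,b\}=\frac{\Gamma(a+b+\frac12)}{(a+b)!\Gamma(a+\frac12)}$, $Z_{n+1}=\sum_{j=0}^n\{n+1,j-1\}R_{n+j,j}$ and $\alpha_n=\sum_{j=0}^{n+1}\{n,j\}S_{n+j,j}$. *)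

(* Defs.v *)
From Stdlib Require Import Rdefinitions.
From HB Require Import structures.
From mathcomp Require Import all_boot all_order all_algebra.
From mathcomp Require Import Rstruct.
From mathcomp Require monalg.
From Stdlib Require Reals.
From mathcomp Require Import finmap.
Import monalg.

Set Implicit Arguments.
Unset Strict Implicit.
Unset Printing Implicit Defensive.
Import GRing.Theory.
Local Open Scope ring_scope.

(* The two generating symbols: N (degree 1) and Delta (degree 2). *)
Inductive letter := LN | LD.

Definition letter_to_bool (l : letter) : bool := if l is LN then true else false.
Definition bool_to_letter (b : bool) : letter := if b then LN else LD.
Lemma letter_boolK : cancel letter_to_bool bool_to_letter.
Proof. by case. Qed.
HB.instance Definition _ := Countable.copy letter (can_type letter_boolK).

(* Words in N, Delta (free monoid), and the free associative R-algebra A. *)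
Definition word := {fmonom letter}.
Definition ncA := {malg R[word]}.

Definition gN : ncA := << FMonom [:: LN] >>.
Definition gD : ncA := << FMonom [:: LD] >>.
Definition gI : ncA := 1.

(* Weight: algebra homomorphism with w(I)=1, w(N)=2, w(Delta)=-1,
   i.e. on a word the product of the letter weights, extended linearly. *)
Definition wletter (l : letter) : R := if l is LN then 2 else -1.
Definition wword (k : word) : R := \prod_(l <- fmonom_val k) wletter l.
Definition wt (A : ncA) : R := \sum_(k <- msupp A) A@_k * wword k.

(* Writing A = Abar N + Atilde Delta: Abar collects the words ending in N,
   with that last N removed (the constant term, if any, is ignored). *)
Definition bar_word (k : word) : ncA :=
  match rev (fmonom_val k) with
  | LN :: u => << FMonom (rev u) >>
  | _ => 0
  end.
Definition bar (A : ncA) : ncA := \sum_(k <- msupp A) A@_k *: bar_word k.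

(* (R_{kj}, S_{kj}); indices are naturals, and the terms with j-1 < 0 vanish. *)
Fixpoint RS (k : nat) : nat -> ncA * ncA :=
  match k with
  | 0 => fun j => if j == 0%N then (gI, 0) else (0, 0)
  | k'.+1 => fun j =>
      let p := RS k' j in
      let q := if j is j'.+1 then RS k' j' else (0, 0) in
      (- (gN * gN + gD) * p.1 + gN * p.2,
       gD * gN * p.1 - gD * p.2 + gN * q.1)
  end.
Definition Rkj (k j : nat) : ncA := (RS k j).1.
Definition Skj (k j : nat) : ncA := (RS k j).2.

(* Gamma at half-integers: Gamma(m + 1/2) = (2m)! sqrt(pi) / (4^m m!). *)
Definition Gamma_half (m : nat) : R :=
  ((2 * m)`!)%:R * R_sqrt.sqrt Rtrigo1.PI / ((4 ^ m)%:R * (m`!)%:R).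

(* {a,b} = Gamma(a+b+1/2) / ((a+b)! Gamma(a+1/2)), for a >= 0, b >= -1 with
   a + b >= 0 (the only cases used); b is an integer. *)
Definition brace (a : nat) (b : int) : R :=
  let s := absz (a%:Z + b) in
  Gamma_half s / ((s`!)%:R * Gamma_half a).

(* Z_{n+1} = sum_{j=0}^n {n+1, j-1} R_{n+j,j}, indexed here by n. *)
Definition Zsucc (n : nat) : ncA :=
  \sum_(0 <= j < n.+1) brace n.+1 (j%:Z - 1) *: Rkj (n + j) j.

Definition alpha (n : nat) : ncA :=
  \sum_(0 <= j < n.+2) brace n j%:Z *: Skj (n + j) j.

(* Double factorial m!! (with 0!! = 1, and (-1)!! = 1 via m <= 0). *)
Fixpoint dfact (m : nat) : nat :=
  match m with
  | 0 => 1
  | 1 => 1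
  | (m'.+2) as m2 => (m2 * dfact m')%N
  end.

(* Main.v *)
Require Import Defs.
From Stdlib Require Import Rdefinitions.
From HB Require Import structures.
From mathcomp Require Import all_boot all_order all_algebra.
From mathcomp Require Import Rstruct.
From mathcomp Require monalg.
From mathcomp Require Import finmap ring lra zify.
From Stdlib Require RIneq R_sqrt Rtrigo1.
Import monalg.
Import GRing.Theory Num.Theory.
Local Open Scope ring_scope.

Definition Lg (h : word -> R) (A : ncA) : R := \sum_(k <- msupp A) A@_k * h k.

Lemma LgE h A : Lg h A = mmap (@idfun R) h A.
Proof. by []. Qed.

Lemma LgD h : {morph Lg h : x y / x + y}.
Proof. by move=> x y; rewrite !LgE mmapD. Qed.
Lemma LgN h : {morph Lg h : x / - x}.
Proof. by move=> x; rewrite !LgE mmapN. Qed.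
Lemma LgB h : {morph Lg h : x y / x - y}.
Proof. by move=> x y; rewrite !LgE mmapB. Qed.
Lemma Lg0 h : Lg h 0 = 0.
Proof. by rewrite LgE mmap0. Qed.
Lemma LgZ h c A : Lg h (c *: A) = c * Lg h A.
Proof.
rewrite !LgE (mmapEw (msuppZ_le c A)) mulr_sumr; apply eq_bigr => k _.
by rewrite mcoeffZ /= mulrA.
Qed.
Lemma LgU h m : Lg h << m >> = h m.
Proof. by rewrite LgE mmapU /= mul1r. Qed.
Lemma Lg_sum h (I : Type) (r : seq I) (P : pred I) (F : I -> ncA) :
  Lg h (\sum_(i <- r | P i) F i) = \sum_(i <- r | P i) Lg h (F i).
Proof. by rewrite LgE raddf_sum. Qed.

Lemma Lg_lin h1 h2 a A : Lg (fun k => a * h1 k + h2 k) A = a * Lg h1 A + Lg h2 A.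
Proof.
rewrite /Lg mulr_sumr -big_split /=; apply eq_bigr => k _; ring.
Qed.

Lemma Lg_ext h1 h2 A : h1 =1 h2 -> Lg h1 A = Lg h2 A.
Proof. by move=> e; apply eq_bigr => k _; rewrite e. Qed.

Lemma mulFM (l : letter) (k : word) : mmul (FMonom [:: l] : word) k = FMonom (l :: fmonom_val k).
Proof. by apply/eqP; rewrite fmP /= fmM. Qed.

Lemma Lg_left h l A : Lg h (<< FMonom [:: l] >> * A) = Lg (fun k => h (FMonom (l :: fmonom_val k))) A.
Proof.
rewrite malgME msuppU1 big_seq_fset1 Lg_sum [RHS]/Lg.
apply eq_bigr => k _; rewrite LgE mmapU mcoeffU1 eqxx mul1r mulFM.
by [].
Qed.

Lemma Lg_scale h a A : Lg (fun k => a * h k) A = a * Lg h A.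
Proof. by rewrite /Lg mulr_sumr; apply eq_bigr => k _; ring. Qed.
Lemma Lg_zero A : Lg (fun _ => 0) A = 0.
Proof. by rewrite /Lg big1 // => k _; rewrite mulr0. Qed.

Definition hF (k : word) : R := wt (bar_word k).
Definition hC (k : word) : R := (fmonom_val k == [::])%:R.

Lemma wword_cons l s : wword (FMonom (l :: s)) = wletter l * wword (FMonom s).
Proof. by rewrite /wword /= big_cons. Qed.

Lemma wtE A : wt A = Lg wword A. Proof. by []. Qed.

Lemma wt_barE A : wt (bar A) = Lg hF A.
Proof.
rewrite wtE /bar Lg_sum [RHS]/Lg; apply eq_bigr => k _.
by rewrite LgZ.
Qed.

Lemma wtU s : wt << FMonom s >> = wword (FMonom s).
Proof. by rewrite wtE LgU. Qed.

Lemma hF_cons l s : hF (FMonom (l :: s)) =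
  wletter l * hF (FMonom s) + (if l is LN then (s == [::])%:R else 0).
Proof.
rewrite /hF /bar_word /=.
case/lastP: s => [|s x].
  by case: l => /=; rewrite ?wtU /wword /= ?big_nil wtE Lg0 ?mulr0 ?addr0 ?add0r.
rewrite -rcons_cons !rev_rcons /=.
have -> : (rcons s x == [::]) = false by case: s.
case: x => /=; last by rewrite wtE Lg0 mulr0 add0r; case: l.
rewrite !revK !wtU wword_cons.
by case: l; rewrite /= addr0.
Qed.

Lemma gNE : gN = << FMonom [:: LN] >>. Proof. by []. Qed.
Lemma gDE : gD = << FMonom [:: LD] >>. Proof. by []. Qed.

Lemma LW_N A : Lg wword (gN * A) = 2 * Lg wword A.
Proof. by rewrite Lg_left -Lg_scale; apply Lg_ext => k; rewrite wword_cons. Qed.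
Lemma LW_D A : Lg wword (gD * A) = - Lg wword A.
Proof. by rewrite Lg_left -mulN1r -Lg_scale; apply Lg_ext => k; rewrite wword_cons. Qed.
Lemma LF_N A : Lg hF (gN * A) = 2 * Lg hF A + Lg hC A.
Proof. by rewrite Lg_left -Lg_lin; apply Lg_ext => k; rewrite hF_cons. Qed.
Lemma LF_D A : Lg hF (gD * A) = - Lg hF A.
Proof. by rewrite Lg_left -mulN1r -Lg_scale; apply Lg_ext => k; rewrite hF_cons /= addr0. Qed.
Lemma LC_N A : Lg hC (gN * A) = 0.
Proof. by rewrite Lg_left -(Lg_zero A); apply Lg_ext => k. Qed.
Lemma LC_D A : Lg hC (gD * A) = 0.
Proof. by rewrite Lg_left -(Lg_zero A); apply Lg_ext => k. Qed.
Lemma Lg1 h : Lg h 1 = h (FMonom [::]).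
Proof.
have -> : (1 : ncA) = << FMonom [::] >>.
  by rewrite -fmoneE.
by rewrite LgU.
Qed.

Lemma Rkj_S k j : Rkj k.+1 j = - (gN * gN + gD) * Rkj k j + gN * Skj k j.
Proof. by []. Qed.
Lemma Skj_S k j : Skj k.+1 j = gD * (gN * Rkj k j) - gD * Skj k j +
   gN * (if j is j'.+1 then Rkj k j' else 0).
Proof. case: j => [|j]; rewrite /Skj /Rkj /= -mulrA //. Qed.
Lemma Rkj_S' k j : Rkj k.+1 j = - (gN * (gN * Rkj k j) + gD * Rkj k j) + gN * Skj k j.
Proof. by rewrite Rkj_S (mulNr (gN*gN+gD)) (mulrDl (gN*gN) gD) -(mulrA gN gN). Qed.
Lemma Rkj_0 j : Rkj 0 j = (j == 0)%:R.
Proof. by rewrite /Rkj /=; case: j. Qed.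
Lemma Skj_0 j : Skj 0 j = 0.
Proof. by rewrite /Skj /=; case: j. Qed.

Definition Wr k j := Lg wword (Rkj k j).
Definition Ws k j := Lg wword (Skj k j).
Definition Fr k j := Lg hF (Rkj k j).
Definition Fs k j := Lg hF (Skj k j).
Definition Cr k j := Lg hC (Rkj k j).
Definition Cs k j := Lg hC (Skj k j).

Lemma LgR h k j : Lg h (Rkj k.+1 j) = - (Lg h (gN * (gN * Rkj k j)) + Lg h (gD * Rkj k j)) + Lg h (gN * Skj k j).
Proof. rewrite Rkj_S'. rewrite LgD. rewrite (LgN h). by rewrite (LgD h). Qed.
Lemma LgS0 h k : Lg h (Skj k.+1 0) = Lg h (gD * (gN * Rkj k 0)) - Lg h (gD * Skj k 0).
Proof. rewrite Skj_S mulr0 addr0. by rewrite (LgB h). Qed.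
Lemma LgS1 h k j : Lg h (Skj k.+1 j.+1) = Lg h (gD * (gN * Rkj k j.+1)) - Lg h (gD * Skj k j.+1) +
   Lg h (gN * Rkj k j).
Proof. rewrite Skj_S. rewrite (LgD h). by rewrite (LgB h). Qed.

Ltac gen_all h A B :=
  generalize (Lg h (gN * (gN * A))) (Lg h (gD * (gN * A))) (Lg h (gN*A)) (Lg h (gD*A))
     (Lg h (gN*B)) (Lg h (gD*B)) (Lg h A) (Lg h B).

Lemma Wr_S k j : Wr k.+1 j = -3 * Wr k j + 2 * Ws k j.
Proof.
rewrite /Wr /Ws LgR. move: (Rkj k j) (Skj k j) => A B.
move: (LW_N (gN*A)) (LW_N A) (LW_D A) (LW_N B).
gen_all wword A B; intros; lra.
Qed.
Lemma Fr_S k j : Fr k.+1 j = -3 * Fr k j + 2 * Fs k j - 2 * Cr k j + Cs k j.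
Proof.
rewrite /Fr /Fs /Cr /Cs LgR. move: (Rkj k j) (Skj k j) => A B.
move: (LF_N (gN*A)) (LF_N A) (LF_D A) (LF_N B) (LC_N A).
gen_all hF A B; generalize (Lg hC (gN * A)) (Lg hC A) (Lg hC B); intros; lra.
Qed.
Lemma Cr_S k j : Cr k.+1 j = 0.
Proof.
rewrite /Cr LgR. move: (Rkj k j) (Skj k j) => A B.
move: (LC_N (gN*A)) (LC_D A) (LC_N B).
gen_all hC A B; intros; lra.
Qed.

Lemma Ws_S k j : Ws k.+1 j = -2 * Wr k j + Ws k j +
   2 * (if j is j'.+1 then Wr k j' else 0).
Proof.
rewrite /Wr /Ws; case: j => [|j].
  rewrite LgS0. move: (Rkj k 0) (Skj k 0) => A B.
  move: (LW_D (gN*A)) (LW_N A) (LW_D B).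
  gen_all wword A B; intros; lra.
rewrite LgS1. move: (Rkj k j.+1) (Skj k j.+1) (Rkj k j) => A B C.
move: (LW_D (gN*A)) (LW_N A) (LW_D B) (LW_N C).
gen_all wword A B; generalize (Lg wword (gN * C)) (Lg wword C); intros; lra.
Qed.
Lemma Fs_S k j : Fs k.+1 j = -2 * Fr k j - Cr k j + Fs k j +
   2 * (if j is j'.+1 then Fr k j' else 0) + (if j is j'.+1 then Cr k j' else 0).
Proof.
rewrite /Fr /Fs /Cr; case: j => [|j].
  rewrite LgS0. move: (Rkj k 0) (Skj k 0) => A B.
  move: (LF_D (gN*A)) (LF_N A) (LF_D B).
  gen_all hF A B; generalize (Lg hC A); intros; lra.
rewrite LgS1. move: (Rkj k j.+1) (Skj k j.+1) (Rkj k j) => A B C.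
move: (LF_D (gN*A)) (LF_N A) (LF_D B) (LF_N C).
gen_all hF A B; generalize (Lg hF (gN * C)) (Lg hF C) (Lg hC A) (Lg hC C); intros; lra.
Qed.
Lemma Cs_S k j : Cs k.+1 j = 0.
Proof.
rewrite /Cs; case: j => [|j].
  rewrite LgS0. move: (Rkj k 0) (Skj k 0) => A B.
  move: (LC_D (gN*A)) (LC_D B).
  gen_all hC A B; intros; lra.
rewrite LgS1. move: (Rkj k j.+1) (Skj k j.+1) (Rkj k j) => A B C.
move: (LC_D (gN*A)) (LC_D B) (LC_N C).
gen_all hC A B; generalize (Lg hC (gN * C)); intros; lra.
Qed.
Lemma base0 j : [/\ Wr 0 j = (j == 0)%:R, Ws 0 j = 0, Fr 0 j = 0 & Fs 0 j = 0].
Proof.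
rewrite /Wr /Ws /Fr /Fs Rkj_0 Skj_0 !Lg0.
case: (j == 0); rewrite /= ?Lg0 // !Lg1 /hF /wword /bar_word /= big_nil.
by rewrite wtE Lg0.
Qed.
Lemma base0c j : Cr 0 j = (j == 0)%:R /\ Cs 0 j = 0.
Proof.
rewrite /Cr /Cs Rkj_0 Skj_0 !Lg0.
by case: (j == 0); rewrite /= ?Lg0 // !Lg1 /hC.
Qed.

Definition T (m r : nat) :=
  \sum_(0 <= k < m.+1) (-1) ^+ k * (('C(m, k))%:R : R) * ('C(2 * k, r))%:R.

Lemma T0 r : T 0 r = (r == 0)%:R.
Proof. by rewrite /T big_nat1 muln0 !bin0n expr0 /= !mul1r. Qed.

Lemma T_rec1 m r : T m.+1 r =
  T m r - \sum_(0 <= k < m.+1) (-1) ^+ k * ('C(m, k))%:R * ('C((2 * k).+2, r))%:R.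
Proof.
rewrite /T big_nat_recl //.
have -> : (\sum_(0 <= i < m.+1) (-1) ^+ i.+1 * ('C(m.+1, i.+1))%:R * ('C(2 * i.+1, r))%:R :> R) =
   \sum_(0 <= i < m.+1) ((-1) ^+ i.+1 * ('C(m, i.+1))%:R * ('C(2 * i.+1, r))%:R -
   (-1) ^+ i * ('C(m, i))%:R * ('C((2 * i).+2, r))%:R).
  apply: eq_bigr => i _.
  have -> : (2 * i.+1 = (2 * i).+2)%N by lia.
  rewrite binS natrD exprS; ring.
rewrite sumrB addrA; congr (_ - _).
rewrite [in RHS]big_nat_recl // big_nat_recr //= (bin_small (ltnSn m)) !bin0 ?mulr0n ?mulr0 ?mul0r ?addr0.
by [].
Qed.

Ltac gen_bin := repeat match goal with |- context[(@GRing.natmul ?T (GRing.one ?T) (binomial ?a ?b))] =>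
   let x := fresh "c" in generalize (@GRing.natmul T (GRing.one T) (binomial a b)) => x end.

Lemma T_rec2 m r : T m.+1 r.+2 = -2 * T m r.+1 - T m r.
Proof.
rewrite T_rec1.
have -> : \sum_(0 <= k < m.+1) (-1) ^+ k * ('C(m, k))%:R * ('C((2 * k).+2, r.+2))%:R =
  T m r.+2 + 2 * T m r.+1 + T m r.
  rewrite /T mulr_sumr -!big_split /=; apply: eq_bigr => k _.
  rewrite !binS !natrD; ring.
ring.
Qed.
Lemma T_rec_1 m : T m.+1 1 = -2 * T m 0.
Proof.
rewrite T_rec1.
have -> : \sum_(0 <= k < m.+1) (-1) ^+ k * ('C(m, k))%:R * ('C((2 * k).+2, 1))%:R =
  T m 1 + 2 * T m 0.
  rewrite /T mulr_sumr -!big_split /=; apply: eq_bigr => k _.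
  rewrite !bin1 !bin0 -addn2 natrD; ring.
ring.
Qed.
Lemma T_rec_0 m : T m.+1 0 = 0.
Proof.
rewrite T_rec1.
have -> : \sum_(0 <= k < m.+1) (-1) ^+ k * ('C(m, k))%:R * ('C((2 * k).+2, 0))%:R =
  T m 0.
  by rewrite /T; apply: eq_bigr => k _; rewrite !bin0.
by rewrite subrr.
Qed.

Lemma T_main m : (forall r, (r < m)%N -> T m r = 0) /\ T m m = (-2) ^+ m.
Proof.
elim: m => [|m [IH1 IH2]]; first by split => [//|]; rewrite T0 expr0.
split.
  case => [|[|r]] lt; first by rewrite T_rec_0.
    by rewrite T_rec_1 IH1 ?mulr0.
  by rewrite T_rec2 !IH1 ?subr0 ?mulr0 //; lia.
case: m IH1 IH2 => [|m] IH1 IH2; first by rewrite T_rec_1 IH2 expr1 mulr1.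
by rewrite T_rec2 IH2 IH1 // subr0 [in RHS]exprS.
Qed.

Lemma binid k m : (k <= m)%N -> (m <= 2*k)%N ->
  ('C(2*k,k) * 'C(k, 2*k - m) = 'C(m,k) * 'C(2*k, m))%N.
Proof.
move=> km mk.
have h1 : ('C(k, 2*k-m) * ((2*k-m)`! * (m-k)`!) = k`!)%N.
  by rewrite -(bin_fact (_ : 2*k-m <= k)%N) //; [congr (_ * (_ * _)); congr (_`!) | ]; lia.
have h2 : ('C(2*k,k) * (k`! * k`!) = (2*k)`!)%N.
  by rewrite -(bin_fact (_ : k <= 2*k)%N) //; [congr (_ * (_ * _)); congr (_`!) | ]; lia.
have h3 : ('C(m,k) * (k`! * (m-k)`!) = m`!)%N by rewrite bin_fact.
have h4 : ('C(2*k,m) * (m`! * (2*k-m)`!) = (2*k)`!)%N by rewrite bin_fact.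
have X0 : (0 < k`! * (m-k)`! * (2*k-m)`!)%N by rewrite !muln_gt0 !fact_gt0.
apply/eqP; rewrite -(eqn_pmul2r X0); apply/eqP.
transitivity ('C(2*k,k) * (k`! * k`!) * 1)%N.
  rewrite -h1. ring.
rewrite h2 -h4 -h3. ring.
Qed.

Definition cb (k a b : nat) := if (b <= a)%N then (('C(k, a - b))%:R : R) else 0.

Lemma cb_idx k a b a' b' : (a + b' = a' + b)%N -> cb k a b = cb k a' b'.
Proof.
move=> e; rewrite /cb.
have -> : (b <= a)%N = (b' <= a')%N by apply/idP/idP; lia.
by case: ifP => // _; have -> : (a - b = a' - b')%N by lia.
Qed.

Lemma cb_pascal k a b : cb k.+1 a.+1 b = cb k a.+1 b + cb k a b.
Proof.
rewrite /cb; case: (leqP b a) => h.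
- have -> : (b <= a.+1)%N by lia.
  have -> : (a.+1 - b = (a - b).+1)%N by lia.
  by rewrite binS natrD.
case: (ltnP a.+1 b) => h2.
  by rewrite addr0.
have -> : b = a.+1 by lia.
by rewrite subnn !bin0 addr0.
Qed.

Lemma cb_big k a b : (k < a - b)%N -> cb k a b = 0.
Proof. by move=> h; rewrite /cb; case: ifP => // _; rewrite bin_small. Qed.
Lemma cb_neg k a b : (a < b)%N -> cb k a b = 0.
Proof. by move=> h; rewrite /cb; case: ifP => //; lia. Qed.

Definition Q0 m := \sum_(0 <= k < m.+1) (-1) ^+ k * ('C(2 * k, k))%:R * cb k (2 * k) m.
Definition Q1 p := \sum_(0 <= k < p.+1) (-1) ^+ k * ('C((2 * k).+2, k.+1))%:R * cb k (2 * k).+1 p.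

Lemma Q0E m : Q0 m = (-2) ^+ m.
Proof.
rewrite -(proj2 (T_main m)) /Q0 /T; apply: eq_big_nat => k /andP [_ km].
rewrite /cb; case: ifP => h.
  by rewrite -mulrA -natrM binid ?natrM ?mulrA //; lia.
move/negbT: h; rewrite -ltnNge => h.
by rewrite (@bin_small (2 * k) m) // !mulr0.
Qed.

Lemma Q1_rec p : Q1 p.+1 + Q1 p = - Q0 p.+1.
Proof.
have eQ : Q1 p = \sum_(0 <= k < p.+2) (-1) ^+ k * ('C((2 * k).+2, k.+1))%:R * cb k (2 * k).+1 p.
  rewrite /Q1 [RHS]big_nat_recr //= cb_big ?mulr0 ?addr0 //; lia.
rewrite eQ /Q1 -big_split /=.
rewrite /Q0 [in RHS]big_nat_recl // (cb_neg 0 (2 * 0) p.+1) ?mulr0 ?add0r; last by lia.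
rewrite [in LHS]big_nat_recr //= (@cb_big p.+1 (2 * p.+1).+1 p.+1); last by lia.
rewrite (@cb_big p.+1 (2 * p.+1).+1 p); last by lia.
rewrite !mulr0 !addr0 -sumrN.
apply: eq_bigr => k _.
rewrite (cb_idx k (2 * k).+1 p.+1 (2 * k) p); last by lia.
rewrite (cb_idx k.+1 (2 * k.+1) p.+1 (2 * k).+1 p); last by lia.
rewrite cb_pascal; have -> : (2 * k.+1 = (2 * k).+2)%N by lia.
rewrite exprS; ring.
Qed.

Lemma Q1E p : Q1 p = -2 * (-1) ^+ p * (2 ^+ p - 1).
Proof.
elim: p => [|p IH].
  by rewrite /Q1 big_nat1 cb_big ?mulr0 //= expr0 subrr mulr0.
have := Q1_rec p; rewrite IH Q0E => h.
have -> : Q1 p.+1 = - (-2) ^+ p.+1 - (-2 * (-1) ^+ p * (2 ^+ p - 1)) by rewrite -h; ring.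
rewrite exprNn !exprS; ring.
Qed.

Lemma sum_zero (F : nat -> R) a b : (forall k, (a <= k < b)%N -> F k = 0) ->
  \sum_(a <= k < b) F k = 0.
Proof.
move=> h; rewrite (eq_big_nat _ _ (F2 := fun _ => 0)) ?big1 //.
Qed.

Lemma sum_shift (F : nat -> R) n J L : (forall k, (k < n)%N -> F k = 0) ->
  (forall k, (L <= k)%N -> F k = 0) -> (L <= n + J)%N ->
  \sum_(0 <= j < J) F (n + j) = \sum_(0 <= k < L) F k.
Proof.
move=> h1 h2 hL.
have e : \sum_(0 <= k < n + J) F k = \sum_(0 <= j < J) F (n + j).
  rewrite (big_cat_nat _ (n := n)) //= ?leq_addr // sum_zero ?add0r; last first.
    by move=> k /andP [_ hk]; apply: h1.
  rewrite -{1}(add0n n) big_addn addKn.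
  by apply: eq_bigr => j _; rewrite addnC.
rewrite -e (big_cat_nat _ (n := L)) //= [X in _ + X]sum_zero ?addr0 //.
by move=> k /andP [hk _]; apply: h2.
Qed.

Definition G k := (('C(2 * k, k))%:R : R) / 4 ^+ k.
Definition xx k a b := (-1) ^+ k * cb k a b * 2 ^+ (a - b).

Lemma xx_idx k a b a' b' : (a + b' = a' + b)%N -> xx k a b = xx k a' b'.
Proof.
move=> e; rewrite /xx (cb_idx k a b a' b' e).
case: (leqP b a) => h; first by have -> : (a - b = a' - b')%N by lia.
rewrite (cb_neg k a' b'); last by lia.
by rewrite !mulr0 !mul0r.
Qed.

Lemma four k : (4 ^+ k = 2 ^+ (2 * k) :> R).
Proof. by rewrite exprM; congr (_ ^+ _); rewrite expr2; ring. Qed.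

Lemma G_xx k m : G k * xx k (2 * k) m =
   (-1) ^+ k * ('C(2 * k, k))%:R * cb k (2 * k) m / 2 ^+ m.
Proof.
rewrite /G /xx; case: (leqP m (2 * k)) => h.
  have e : (2 ^+ (2 * k) = 2 ^+ (2 * k - m) * 2 ^+ m :> R).
    by rewrite -exprD subnK.
  rewrite four e; field.
  by rewrite !expf_neq0 // pnatr_eq0.
by rewrite cb_neg // !mulr0 !mul0r mulr0.
Qed.

Lemma G_xx1 k p : G k.+1 * xx k (2 * k).+1 p =
   (-1) ^+ k * ('C((2 * k).+2, k.+1))%:R * cb k (2 * k).+1 p / 2 ^+ p.+1.
Proof.
rewrite /G /xx; have -> : (2 * k.+1 = (2 * k).+2)%N by lia.
case: (leqP p (2 * k).+1) => h.
  have e : (4 ^+ k.+1 = 2 ^+ ((2 * k).+1 - p) * 2 ^+ p.+1 :> R).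
    by rewrite four -exprD; congr (_ ^+ _); lia.
  rewrite e; field.
  by rewrite !expf_neq0 // pnatr_eq0.
by rewrite cb_neg // !mulr0 !mul0r mulr0.
Qed.

Lemma SumA n m J : (2 * n <= m.+1)%N -> (m.+1 <= n + J)%N ->
  \sum_(0 <= j < J) G (n + j) * xx (n + j) (2 * (n + j)) m = (-1) ^+ m.
Proof.
move=> h1 h2.
rewrite (sum_shift (fun k => G k * xx k (2 * k) m) n J m.+1) //; last first.
- by move=> k hk /=; rewrite /xx cb_big ?(mulr0, mul0r) //; lia.
- by move=> k hk /=; rewrite /xx cb_neg ?(mulr0, mul0r) //; lia.
under eq_bigr => k _ do rewrite G_xx.
rewrite -mulr_suml -/(Q0 m) Q0E exprNn; field.
by rewrite expf_neq0 // pnatr_eq0.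
Qed.

Lemma SumB n p J : (1 <= n)%N -> (2 * n - 2 <= p)%N -> (p.+1 <= n - 1 + J)%N ->
  \sum_(0 <= j < J) G (n + j) * xx (n - 1 + j) (2 * (n - 1 + j)).+1 p =
  -2 * (-1) ^+ p * (2 ^+ p - 1) / 2 ^+ p.+1.
Proof.
move=> h0 h1 h2.
have -> : \sum_(0 <= j < J) G (n + j) * xx (n - 1 + j) (2 * (n - 1 + j)).+1 p =
   \sum_(0 <= j < J) G (n - 1 + j).+1 * xx (n - 1 + j) (2 * (n - 1 + j)).+1 p.
  by apply: eq_bigr => j _; have -> : (n + j = (n - 1 + j).+1)%N by lia.
rewrite (sum_shift (fun k => G k.+1 * xx k (2 * k).+1 p) (n - 1) J p.+1) //; last first.
- by move=> k hk /=; rewrite /xx cb_big ?(mulr0, mul0r) //; lia.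
- by move=> k hk /=; rewrite /xx cb_neg ?(mulr0, mul0r) //; lia.
under eq_bigr => k _ do rewrite G_xx1.
by rewrite -mulr_suml -/(Q1 p) Q1E.
Qed.

Lemma FW k j : Fr k.+1 j = (Wr k.+1 j - Wr k j) / 2 /\ Fs k.+1 j = (Ws k.+1 j - Ws k j) / 2.
Proof.
elim: k j => [|k IH] j.
  case: j => [|j].
    have [w0 s0 f0 g0] := base0 0; have [c0 d0] := base0c 0.
    rewrite Fr_S Fs_S Wr_S Ws_S w0 s0 f0 g0 c0 d0 /=.
    by split; field.
  have [w0 s0 f0 g0] := base0 j.+1; have [c0 d0] := base0c j.+1.
  have [w1 s1 f1 g1] := base0 j; have [c1 d1] := base0c j.
  rewrite Fr_S Fs_S Wr_S Ws_S w0 s0 f0 g0 c0 d0 w1 f1 c1 /=.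
  by split; field.
have [IH1 IH2] := IH j.
rewrite (Fr_S k.+1 j) (Fs_S k.+1 j) (Cr_S k j) (Cs_S k j) IH1 IH2 (Wr_S k.+1 j) (Ws_S k.+1 j) (Wr_S k j) (Ws_S k j).
case: j IH1 IH2 => [|j] IH1 IH2.
  by split; field.
have [IH3 _] := IH j.
rewrite Cr_S IH3 (Wr_S k j).
by split; field.
Qed.

Lemma xx_rec k a b : xx k.+1 a b = - xx k a b - 2 * xx k a b.+1.
Proof.
rewrite (xx_idx k.+1 a b a.+1 b.+1) ?addnS // (xx_idx k a b a.+1 b.+1) ?addnS //.
rewrite /xx cb_pascal exprS.
case: (leqP b.+1 a) => h.
  have -> : (a.+1 - b.+1 = (a - b.+1).+1)%N by lia.
  rewrite exprS; ring.
rewrite (cb_neg k a b.+1) //; ring.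
Qed.

Lemma Wclosed k j : Wr k j = xx k (2 * j) 0 + xx k (2 * j).+1 0 /\
                    Ws k j = xx k (2 * j).+1 0 - xx k (2 * j) 1.
Proof.
elim: k j => [|k IH] j.
  case: j => [|j].
    have [w0 s0 _ _] := base0 0; rewrite w0 s0 /xx /cb !subn0 /=.
    rewrite muln0 !bin0n /= !expr0 expr1.
    by split; ring.
  have [w0 s0 _ _] := base0 j.+1; rewrite w0 s0 /xx /cb !subn0 /=.
  have -> : (2 * j.+1 = (2 * j).+2)%N by lia.
  rewrite !bin0n /=.
  by split; ring.
have [IH1 IH2] := IH j.
rewrite Wr_S Ws_S IH1 IH2 !xx_rec.
rewrite (xx_idx k (2 * j).+1 1 (2 * j) 0); last by lia.
case: j IH1 IH2 => [|j] IH1 IH2.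
  rewrite !muln0.
  rewrite /xx (cb_neg k 0 1) // (cb_neg k 0 2) //; split; ring.
have [IH3 _] := IH j.
rewrite IH3.
have -> : (2 * j.+1 = (2 * j).+2)%N by lia.
rewrite (xx_idx k (2 * j).+2 1 (2 * j).+1 0); last by lia.
rewrite (xx_idx k (2 * j).+2 2 (2 * j) 0); last by lia.
split; ring.
Qed.

Lemma sqrtPI_neq0 : R_sqrt.sqrt Rtrigo1.PI != 0.
Proof. apply/eqP; apply: RIneq.Rgt_not_eq; apply: R_sqrt.sqrt_lt_R0; exact: Rtrigo1.PI_RGT_0. Qed.

Lemma fact_neq0 m : ((m`!)%:R : R) != 0.
Proof. by rewrite pnatr_eq0 -lt0n fact_gt0. Qed.

Lemma G_neq0 m : G m != 0.
Proof.
have h1 : (('C(2 * m, m))%:R != 0 :> R) by rewrite pnatr_eq0 -lt0n bin_gt0; lia.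
have h2 : (4 ^+ m != 0 :> R) by rewrite expf_neq0 // pnatr_eq0.
by rewrite /G mulf_neq0 // invr_eq0.
Qed.

Lemma Gh m : Gamma_half m = G m * (m`!)%:R * R_sqrt.sqrt Rtrigo1.PI.
Proof.
rewrite /Gamma_half RdivE !RmultE /G natrX.
have e : ((2 * m)`! = 'C(2 * m, m) * (m`! * m`!))%N.
  rewrite -(bin_fact (_ : m <= 2 * m)%N) //; last by lia.
  by have -> : (2 * m - m = m)%N by lia.
rewrite e !natrM; field.
by rewrite fact_neq0 expf_neq0 // pnatr_eq0.
Qed.

Lemma brace_eq a b s : absz (a%:Z + b) = s -> brace a b = G s / (G a * (a`!)%:R).
Proof.
move=> e; rewrite /brace e /= RdivE !RmultE !Gh.
field.
by rewrite sqrtPI_neq0 !fact_neq0 G_neq0.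
Qed.

Lemma dfactS n : dfact (2 * n).+1 = ((2 * n).+1 * dfact (2 * n - 1))%N.
Proof.
case: n => [|n] //.
have -> : (2 * n.+1).+1 = (2 * n.+1 - 1).+2 by lia.
by [].
Qed.

Lemma dfact_fact n : ((2 * n)`! = 2 ^ n * n`! * dfact (2 * n - 1))%N.
Proof.
elim: n => [|n IH] //.
have -> : (2 * n.+1 = (2 * n).+2)%N by lia.
have -> : ((2 * n).+2 - 1 = (2 * n).+1)%N by lia.
rewrite dfactS !factS IH expnS; ring.
Qed.

Lemma Gfact n : G n * (n`!)%:R = (dfact (2 * n - 1))%:R / 2 ^+ n.
Proof.
have e : ('C(2 * n, n) * n`! = 2 ^ n * dfact (2 * n - 1))%N.
  apply/eqP; rewrite -(eqn_pmul2r (fact_gt0 n)); apply/eqP.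
  transitivity ((2 * n)`!); last by rewrite dfact_fact; ring.
  rewrite -(bin_fact (_ : n <= 2 * n)%N); last by lia.
  have -> : (2 * n - n = n)%N by lia.
  ring.
rewrite /G mulrAC -natrM e natrM natrX four.
have -> : (2 * n = n + n)%N by lia.
rewrite exprD; field.
by rewrite expf_neq0 // pnatr_eq0.
Qed.

Lemma alpha_sum n : wt (bar (alpha n)) = \sum_(0 <= j < n.+2) brace n j%:Z * Fs (n + j) j.
Proof.
rewrite wt_barE /alpha Lg_sum; apply: eq_bigr => j _.
by rewrite LgZ.
Qed.

Lemma Z_sum n : wt (bar (Zsucc n)) = \sum_(0 <= j < n.+1) brace n.+1 (j%:Z - 1) * Fr (n + j) j.
Proof.
rewrite wt_barE /Zsucc Lg_sum; apply: eq_bigr => j _.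
by rewrite LgZ.
Qed.

Lemma sgn_even (T : pzRingType) (k : nat) : (-1 : T) ^+ (2 * k) = 1.
Proof. by rewrite exprM expr2 mulN1r opprK expr1n. Qed.

Lemma dfact_gt0 m : (0 < dfact m)%N.
Proof.
suff : (0 < dfact m)%N /\ (0 < dfact m.+1)%N by case.
elim: m => [|m [h1 h2]] //; split => //=; rewrite muln_gt0 h1 //.
Qed.
Lemma two_even (T : pzRingType) (k : nat) : (2 : T) ^+ (2 * k) = 2 ^+ k * 2 ^+ k.
Proof. by rewrite -exprD; congr (_ ^+ _); lia. Qed.

Lemma alpha_pos n : wt (bar (alpha n.+1)) =
  - (3 / ((2 ^ n.+2)%:R * (dfact (2 * n.+1 - 1))%:R)).
Proof.
rewrite alpha_sum.
pose c := 1 / (2 * (G n.+1 * (n.+1)`!%:R)).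
have key : forall j, brace n.+1 j%:Z * Fs (n.+1 + j) j = c *
   (G (n.+1 + j) * xx (n.+1 + j) (2 * (n.+1 + j)) (2 * n.+1 - 1)
  - G (n.+1 + j) * xx (n.+1 + j) (2 * (n.+1 + j)) (2 * n.+1 + 1)
  - G (n.+1 + j) * xx (n.+1 - 1 + j) (2 * (n.+1 - 1 + j)).+1 (2 * n.+1 - 2)
  + G (n.+1 + j) * xx (n.+1 - 1 + j) (2 * (n.+1 - 1 + j)).+1 (2 * n.+1)).
  move=> j.
  rewrite (brace_eq n.+1 j%:Z (n.+1 + j)); last by rewrite -PoszD.
  have [_ hF] := FW (n.+1 - 1 + j) j.
  have e : ((n.+1 - 1 + j).+1 = n.+1 + j)%N by lia.
  rewrite e in hF; rewrite hF.
  have [_ hW1] := Wclosed (n.+1 + j) j; have [_ hW2] := Wclosed (n.+1 - 1 + j) j.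
  rewrite hW1 hW2.
  rewrite (xx_idx (n.+1 + j) (2 * j).+1 0 (2 * (n.+1 + j)) (2 * n.+1 - 1)); last by lia.
  rewrite (xx_idx (n.+1 + j) (2 * j) 1 (2 * (n.+1 + j)) (2 * n.+1 + 1)); last by lia.
  rewrite (xx_idx (n.+1 - 1 + j) (2 * j).+1 0 (2 * (n.+1 - 1 + j)).+1 (2 * n.+1 - 2)); last by lia.
  rewrite (xx_idx (n.+1 - 1 + j) (2 * j) 1 (2 * (n.+1 - 1 + j)).+1 (2 * n.+1)); last by lia.
  rewrite /c; field.
  by rewrite G_neq0 fact_neq0.
rewrite (eq_bigr _ (fun j _ => key j)) -mulr_sumr big_split /= !sumrB.
rewrite (SumA n.+1 (2 * n.+1 - 1) n.+3); [|lia|lia].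
rewrite (SumA n.+1 (2 * n.+1 + 1) n.+3); [|lia|lia].
rewrite (SumB n.+1 (2 * n.+1 - 2) n.+3); [|lia|lia|lia].
rewrite (SumB n.+1 (2 * n.+1) n.+3); [|lia|lia|lia].
rewrite /c Gfact natrX.
have -> : (2 * n.+1 - 1 = (2 * n).+1)%N by lia.
have -> : (2 * n.+1 + 1 = (2 * n).+3)%N by lia.
have -> : (2 * n.+1 - 2 = (2 * n))%N by lia.
have -> : (2 * n.+1 = (2 * n).+2)%N by lia.
rewrite !exprS sgn_even two_even.
have hu : (2 ^+ n != 0 :> R) by rewrite expf_neq0 // pnatr_eq0.
have hd : ((dfact (2 * n).+1)%:R != 0 :> R).
  by rewrite pnatr_eq0 -lt0n dfact_gt0.
field.
by rewrite hu hd.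
Qed.

Lemma Z_pos n : wt (bar (Zsucc n.+1)) =
  - (1 / ((2 ^ (n.+1 - 1))%:R * (dfact (2 * n.+1 + 1))%:R)).
Proof.
have -> : (2 * n.+1 + 1 = (2 * n).+3)%N by lia.
rewrite Z_sum.
pose c := 1 / (2 * (G n.+2 * (n.+2)`!%:R)).
have key : forall j, brace n.+2 (j%:Z - 1) * Fr (n.+1 + j) j = c *
   (G (n.+1 + j) * xx (n.+1 + j) (2 * (n.+1 + j)) (2 * n.+1)
  + G (n.+1 + j) * xx (n.+1 + j) (2 * (n.+1 + j)) (2 * n.+1 - 1)
  - G (n.+1 + j) * xx (n.+1 - 1 + j) (2 * (n.+1 - 1 + j)).+1 (2 * n.+1 - 1)
  - G (n.+1 + j) * xx (n.+1 - 1 + j) (2 * (n.+1 - 1 + j)).+1 (2 * n.+1 - 2)).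
  move=> j.
  rewrite (brace_eq n.+2 (j%:Z - 1) (n.+1 + j)); last first.
    have -> : (Posz n.+2 + (j%:Z - 1) = Posz (n.+1 + j))%R by rewrite PoszD; lia.
    by [].
  have [hF _] := FW (n.+1 - 1 + j) j.
  have e : ((n.+1 - 1 + j).+1 = n.+1 + j)%N by lia.
  rewrite e in hF; rewrite hF.
  have [hW1 _] := Wclosed (n.+1 + j) j; have [hW2 _] := Wclosed (n.+1 - 1 + j) j.
  rewrite hW1 hW2.
  rewrite (xx_idx (n.+1 + j) (2 * j) 0 (2 * (n.+1 + j)) (2 * n.+1)); last by lia.
  rewrite (xx_idx (n.+1 + j) (2 * j).+1 0 (2 * (n.+1 + j)) (2 * n.+1 - 1)); last by lia.
  rewrite (xx_idx (n.+1 - 1 + j) (2 * j) 0 (2 * (n.+1 - 1 + j)).+1 (2 * n.+1 - 1)); last by lia.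
  rewrite (xx_idx (n.+1 - 1 + j) (2 * j).+1 0 (2 * (n.+1 - 1 + j)).+1 (2 * n.+1 - 2)); last by lia.
  rewrite /c; field.
  by rewrite G_neq0 fact_neq0.
rewrite (eq_bigr _ (fun j _ => key j)) -mulr_sumr !sumrB big_split [LHS]/=.
rewrite (SumA n.+1 (2 * n.+1) n.+2); [|lia|lia].
rewrite (SumA n.+1 (2 * n.+1 - 1) n.+2); [|lia|lia].
rewrite (SumB n.+1 (2 * n.+1 - 1) n.+2); [|lia|lia|lia].
rewrite (SumB n.+1 (2 * n.+1 - 2) n.+2); [|lia|lia|lia].
rewrite /c Gfact !natrX.
have -> : (2 * n.+2 - 1 = (2 * n).+3)%N by lia.
have -> : (2 * n.+1 - 1 = (2 * n).+1)%N by lia.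
have -> : (2 * n.+1 - 2 = (2 * n))%N by lia.
have -> : (2 * n.+1 = (2 * n).+2)%N by lia.
have -> : (n.+1 - 1 = n)%N by lia.
rewrite !exprS sgn_even two_even.
have hu : (2 ^+ n != 0 :> R) by rewrite expf_neq0 // pnatr_eq0.
have hd : ((dfact (2 * n).+3)%:R != 0 :> R) by rewrite pnatr_eq0 -lt0n dfact_gt0.
field.
by rewrite hu hd.
Qed.

Lemma alpha0 : wt (bar (alpha 0)) = 1 / 2.
Proof.
rewrite alpha_sum !big_nat_recl // big_geq // addr0 !add0n.
have [_ _ _ g0] := base0 0.
have [w1 s1 f1 g1] := base0 1; have [c1 d1] := base0c 1.
have [w0 s0 f0 _] := base0 0; have [c0 d0] := base0c 0.
rewrite g0 mulr0 add0r (Fs_S 0 1) f1 c1 g1 f0 c0 /=.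
rewrite (brace_eq 0 1 1) // /G muln1 muln0 bin0 bin1 expr0 expr1 fact0.
by field.
Qed.

Theorem proposition5p2 :
  wt (bar (alpha 0)) = 1 / 2 /\
  (forall n : nat, (1 <= n)%N ->
     wt (bar (alpha n)) = - (3 / ((2 ^ n.+1)%:R * (dfact (2 * n - 1))%:R)) /\
     wt (bar (Zsucc n)) = - (1 / ((2 ^ (n - 1))%:R * (dfact (2 * n + 1))%:R))).
Proof.
split; first exact: alpha0.
case => [//|n] _; split; [exact: alpha_pos | exact: Z_pos].
Qed.
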